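(* Let $\mathcal{G}_n(\mathcal{X},\mathcal{Y},d,Q)$ be a position-optimization game (as defined in the context) and let $c>0$ satisfy $n\ge\frac1c>\frac{2}{p_0}$. Then in every pure Nash equilibrium $\bm{x}$, for every $x\in\mathcal{X}^*$, $k_{\bm{x}}(x)\ge\lfloor cn\rfloor$.
   Context: Position-optimization game: $\mathcal{X}$ is an arbitrary set of positions, $\mathcal{Y}$ an arbitrary set of targets, $d:\mathcal{X}\times\mathcal{Y}\to[0,\infty]$ a proximity function. For $y\in\mathcal{Y}$ let $x^*(y)=\arg\min_{x\in\mathcal{X}} d(x,y)$, and $\mathcal{X}^*=\bigcup_{y\in\mathcal{Y}}x^*(y)$ (pseudo-targets). $Q$ is a probability distribution on $\mathcal{Y}$ with $Q(\{y:|x^*(y)|>1\})=0$ and $|\mathcal{X}^*|<\infty$. For $x\in\mathcal{X}^*$ let $P(x)=Q(\{y: x^*(y)=\{x\}\})$ and $p_0=\min_{x\in\mathcal{X}^*}P(x)$. In the game $\mathcal{G}_n(\mathcal{X},\mathcal{Y},d,Q)$, players $i\in[n]$ choose positions $x_i\in\mathcal{X}$, $\bm{x}=(x_1,\dots,x_n)$; with $X_{\min}(\bm{x},y)=\arg\min_{x_i\in\bm{x}} d(x_i,y)$, player $i$'s utility is $u_i(x_i,\bm{x}_{-i})=\mathbb{E}_{y\sim Q}\big[\mathbb{1}[x_i\in X_{\min}(\bm{x},y)]/|X_{\min}(\bm{x},y)|\big]$. A pure Nash equilibrium is $\bm{x}$ with $u_i(x_i',\bm{x}_{-i})\le u_i(x_i,\bm{x}_{-i})$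 for all $i$, $x_i'\in\mathcal{X}$. $k_{\bm{x}}(x)$ is the number of players at position $x$. *)

(* Defs.v *)
From HB Require Import structures.
From mathcomp Require Import all_boot all_order all_algebra.
From mathcomp Require Import all_classical all_reals all_analysis measurable_realfun.
Set Implicit Arguments. Unset Strict Implicit. Unset Printing Implicit Defensive.
Import Order.TTheory GRing.Theory Num.Theory.
Local Open Scope classical_set_scope.
Local Open Scope ring_scope.

Section Game.
Context {R : realType} {X : Type} {dY : measure_display} {Y : measurableType dY}.
Variable d : X -> Y -> \bar R.

Definition xstar (y : Y) : set X := [set x | forall x', (d x y <= d x' y)%E].

Definition Xstar : set X := [set x | exists y, xstar y x].

Definition multi_set : set Y :=
  [set y | exists x1 x2, x1 <> x2 /\ xstar y x1 /\ xstar y x2].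

Definition uniq_set (x : X) : set Y := [set y | xstar y = [set x]].

Definition Pmass (Q : probability Y R) (x : X) : R := fine (Q (uniq_set x)).

(* p_0 = min_{x in X^*} P(x) (X^* is finite, so the infimum is the minimum) *)
Definition p0 (Q : probability Y R) : R := inf [set Pmass Q x | x in Xstar].

Definition Xmin (n : nat) (xs : 'I_n -> X) (y : Y) : {set 'I_n} :=
  [set i | `[< forall j, (d (xs i) y <= d (xs j) y)%E >]].

Definition payoff (n : nat) (xs : 'I_n -> X) (i : 'I_n) (y : Y) : \bar R :=
  ((i \in Xmin xs y)%:R / #|Xmin xs y|%:R)%:E.

Definition utility (Q : probability Y R) (n : nat) (xs : 'I_n -> X) (i : 'I_n)
  : \bar R :=
  (\int[Q]_y payoff xs i y)%E.

Definition deviate (n : nat) (xs : 'I_n -> X) (i : 'I_n) (x' : X) : 'I_n -> X :=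
  fun j => if j == i then x' else xs j.

Definition is_pure_NE (Q : probability Y R) (n : nat) (xs : 'I_n -> X) : Prop :=
  forall (i : 'I_n) (x' : X),
    (utility Q (deviate xs i x') i <= utility Q xs i)%E.

End Game.

Definition kcount {X : Type} (n : nat) (xs : 'I_n -> X) (x : X) : nat :=
  #|[set i : 'I_n | `[< xs i = x >]]|.

(* Main.v *)
Require Import Defs.
From HB Require Import structures.
From mathcomp Require Import all_boot all_order all_algebra.
From mathcomp Require Import all_classical all_reals all_analysis measurable_realfun.
From mathcomp Require Import lra.
Import Order.TTheory GRing.Theory Num.Theory.
Local Open Scope classical_set_scope.
Local Open Scope ring_scope.

Lemma exists_min (T : finType) disp (O : orderType disp) (F : T -> O) (i0 : T) :
  exists i, forall j, (F i <= F j)%O.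
Proof.
case: (@arg_minP _ _ _ i0 xpredT F isT) => i _ H; exists i => j; exact: H.
Qed.

Lemma strict_uniq (R : realType) (X : Type) (dY : measure_display)
  (Y : measurableType dY) (d : X -> Y -> \bar R) x y x' :
  uniq_set d x y -> x' <> x -> (d x y < d x' y)%E.
Proof.
move=> U nx.
have hx : xstar d y x by rewrite U.
case: (ltP (d x y) (d x' y)) => // h.
exfalso; apply: nx.
have : xstar d y x' by move=> z; apply: le_trans h (hx z).
by rewrite U.
Qed.

Lemma Xmin_uniq (R : realType) (X : Type) (dY : measure_display)
  (Y : measurableType dY) (d : X -> Y -> \bar R) n (xs : 'I_n -> X) i x y :
  uniq_set d x y ->
  i \in Xmin d (deviate xs i x) y /\
  (#|Xmin d (deviate xs i x) y| <= (kcount xs x).+1)%N.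
Proof.
move=> U.
have hx : xstar d y x by rewrite U.
have di : deviate xs i x i = x by rewrite /deviate eqxx.
split.
  by rewrite inE; apply/asboolP => j; rewrite di; apply: hx.
have eK : kcount xs x = #|[set j | `[< xs j = x >]]%SET|.
  apply: eq_card => j; rewrite inE; apply/idP/idP; first by rewrite in_setE.
  by move=> H; rewrite in_setE.
rewrite eK -add1n.
have c1 : (#|i |: [set j | `[< xs j = x >]]%SET| <= 1 + #|[set j | `[< xs j = x >]]%SET|)%N.
  by rewrite cardsU1 leq_add2r leq_b1.
apply: leq_trans c1.
apply: subset_leq_card; apply/fintype.subsetP => j; rewrite inE => /asboolP H.
rewrite !inE.
have Hj := H i; rewrite di in Hj.
case: (eqVneq j i) => [//|nji] /=.
apply/asboolP.
have e : deviate xs i x j = xs j by rewrite /deviate (negbTE nji).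
rewrite e in Hj.
case: (pselect (xs j = x)) => // nx.
by have := strict_uniq _ _ _ _ _ _ _ _ U nx; rewrite ltNge Hj.
Qed.

Theorem lemma5 (R : realType) (X : Type) (dY : measure_display)
  (Y : measurableType dY) (d : X -> Y -> \bar R) (Q : probability Y R)
  (n : nat) (c : R) :
  (forall x y, (0 <= d x y)%E) ->
  (forall (xs : 'I_n -> X) (i : 'I_n), measurable_fun setT (payoff d xs i)) ->
  measurable (multi_set d) ->
  (forall x, Xstar d x -> measurable (uniq_set d x)) ->
  Q (multi_set d) = 0%E ->
  finite_set (Xstar d) ->
  0 < c ->
  c^-1 <= n%:R ->
  0 < p0 d Q ->
  2 / p0 d Q < c^-1 ->
  forall xs : 'I_n -> X, is_pure_NE d Q xs ->
  forall x : X, Xstar d x ->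
    Num.floor (c * n%:R) <= (kcount xs x)%:Z.
Proof.
move=> d0 mpay _ mU _ _ c0 cn p0pos p0c xs NE x Xx.
have ic0 : 0 < c^-1 by rewrite invr_gt0.
have n0 : (0 < n)%N.
  rewrite lt0n; apply/negP => /eqP n0; move: cn; rewrite n0 => h; lra.
have pay0 : forall (zs : 'I_n -> X) i y, (0 <= payoff d zs i y)%E.
  by move=> zs i y; rewrite /payoff lee_fin divr_ge0 // ler0n.
have pay1 : forall (zs : 'I_n -> X) i y, (payoff d zs i y <= 1)%E.
  move=> zs i y; rewrite /payoff lee_fin.
  case: (boolP (i \in Xmin d zs y)) => h /=; last by rewrite mul0r.
  have : (0 < #|Xmin d zs y|)%N by apply/card_gt0P; exists i.
  move=> h0; rewrite mul1r invr_le1 ?ler1n ?ltr0n //.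
  by rewrite unitfE pnatr_eq0 -lt0n.
have ule1 : forall (zs : 'I_n -> X) i, (utility d Q zs i <= 1)%E.
  move=> zs i; rewrite /utility.
  have := @ge0_le_integral _ _ _ Q setT measurableT (payoff d zs i) (cst 1%E)
    (fun y _ => pay0 zs i y) (mpay zs i) (measurable_cst _) (fun y _ => pay1 zs i y).
  rewrite integral_cst // mul1e; move=> H; apply: (le_trans H); rewrite le_eqVlt; apply/orP; left; apply/eqP; exact: probability_setT.
have hu : forall (zs : 'I_n -> X) i,
    utility d Q zs i = (fine (utility d Q zs i))%:E.
  move=> zs i; rewrite fineK // ge0_fin_numE; last first.
    by apply: integral_ge0 => y _; exact: pay0.
  exact: le_lt_trans (ule1 zs i) (ltry _).
have hs : \sum_(i < n) fine (utility d Q xs i) = 1.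
  apply: (@EFin_inj R); rewrite -sumEFin.
  under eq_bigr do rewrite -hu.
  rewrite /utility -ge0_integral_sum //.
  have -> : (\int[Q]_(y in setT) (\sum_(i < n) payoff d xs i y) =
            \int[Q]_(y in setT) (cst 1) y)%E.
    apply: eq_integral => y _.
    have [j hj] := @exists_min _ _ _ (fun j => d (xs j) y) (Ordinal n0).
    have jS : j \in Xmin d xs y by rewrite inE; apply/asboolP.
    rewrite /payoff sumEFin /=; congr EFin.
    rewrite -mulr_suml.
    have -> : \sum_(i < n) ((i \in Xmin d xs y)%:R : R) =
              \sum_(i < n | i \in Xmin d xs y) 1.
      by rewrite [RHS]big_mkcond /=; apply: eq_bigr => i _; case: (i \in _).
    rewrite sumr_const divff // pnatr_eq0 -lt0n.
    by apply/card_gt0P; exists j.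
  rewrite integral_cst // mul1e; exact: probability_setT.
have [i0 hi0] := @exists_min _ _ _ (fun i => fine (utility d Q xs i)) (Ordinal n0).
set r := fine (utility d Q xs i0) in hi0.
have hrn : r * n%:R <= 1.
  rewrite mulr_natr -hs.
  have := @ler_sum _ _ (index_enum 'I_n) xpredT (fun _ => r)
    (fun i => fine (utility d Q xs i)) (fun i _ => hi0 i).
  by rewrite sumr_const card_ord.
set P := Pmass d Q x.
set k := kcount xs x.
have QU : Q (uniq_set d x) = P%:E.
  rewrite /P /Pmass fineK // ge0_fin_numE ?measure_ge0 //.
  exact: le_lt_trans (probability_le1 Q (mU x Xx)) (ltry _).
have hl : (((k.+1)%:R^-1 * P)%:E <= utility d Q (deviate xs i0 x) i0)%E.
  rewrite /utility.
  have mUx := mU x Xx.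
  apply: le_trans (ge0_subset_integral Q mUx measurableT (mpay _ i0)
    (fun y _ => pay0 _ i0 y) (@subsetT _ _)).
  have H : forall y, uniq_set d x y ->
      ((cst ((k.+1)%:R^-1)%:E) y <= payoff d (deviate xs i0 x) i0 y)%E.
    move=> y Uy; have [iS cS] := @Xmin_uniq _ _ _ _ d n xs i0 x y Uy.
    have cp : (0 < #|Xmin d (deviate xs i0 x) y|)%N by apply/card_gt0P; exists i0.
    rewrite /payoff iS mul1r lee_fin lef_pV2 ?posrE ?ltr0n // ler_nat.
    exact: cS.
  have := @ge0_le_integral _ _ _ Q (uniq_set d x) mUx
    (cst ((k.+1)%:R^-1)%:E) (payoff d (deviate xs i0 x) i0)
    (fun _ _ => ltac:(by rewrite lee_fin invr_ge0 ler0n)) (measurable_cst _)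
    (measurable_funS measurableT (@subsetT _ _) (mpay _ i0)) H.
  rewrite integral_cst // => H'; apply: le_trans H'.
  rewrite EFinM le_eqVlt; apply/orP; left; apply/eqP; f_equal; exact/esym/QU.
have hPr : (k.+1)%:R^-1 * P <= r.
  by rewrite -lee_fin /r -hu; apply: le_trans hl (NE i0 x).
have hp0 : p0 d Q <= P.
  apply: ge_inf; last by exists x.
  exists 0 => z [w _ <-]; rewrite /Pmass fine_ge0 // measure_ge0.
have h2c : 2 * c < p0 d Q.
  by move: p0c; rewrite ltr_pdivrMr // mulrC ltr_pdivlMr.
have hcn : 1 <= n%:R * c by move: cn; rewrite -div1r ler_pdivrMr.
have hK : P <= r * (k.+1)%:R.
  by move: hPr; rewrite mulrC ler_pdivrMr // ltr0n.
have h3 : r * (k.+1)%:R * n%:R <= (k.+1)%:R.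
  by rewrite mulrAC; apply: ler_piMl.
have h2 : P * n%:R <= r * (k.+1)%:R * n%:R by apply: ler_wpM2r.
have Nn : 0 < (n%:R : R) by rewrite ltr0n.
have h1 : 2 * c * n%:R < P * n%:R.
  by rewrite ltr_pM2r //; apply: lt_le_trans hp0.
have fin : c * n%:R < (k.+1)%:R.
  have : c * n%:R = n%:R * c by rewrite mulrC.
  lra.
rewrite -ltzD1 floor_lt_int.
by rewrite -PoszD addn1.
Qed.
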